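(* Let $\mathcal{T}=(V,\mathsf{p})$ be a directed forest with leafless support $\mathring{\mathcal{T}}=(V,\mathring{\mathsf{p}})$. If $v\in V\setminus\mathrm{root}(\mathring{\mathcal{T}})$, then $\mathring{\mathsf{p}}^n(v)=\mathsf{p}^n(v)$ for all $n\in\{0,1,2,\dots\}$. Consequently, if two vertices $v_1,v_2\in V\setminus\mathrm{root}(\mathring{\mathcal{T}})$ belong to the same tree of $\mathcal{T}$, then they belong to the same tree of $\mathring{\mathcal{T}}$. In particular, if $\mathcal{T}$ is a directed tree, then $\mathring{\mathcal{T}}$ contains at most one non-degenerate tree.
   Context: A directed forest is a pair $\mathcal{T}=(V,\mathsf{p})$ where $V$ is a nonempty set and $\mathsf{p}\colon V\to V$ satisfies: if $n\in\mathbb{N}$, $v\in V$ and $\mathsf{p}^n(v)=v$, then $\mathsf{p}(v)=v$. Roots: $\mathrm{root}(\mathcal{T})=\{v:\mathsf{p}(v)=v\}$. The forest is leafless if $\mathsf{p}(V)=V$. The trees of $\mathcal{T}$ are the connected components of the graph on $V$ with edges $\{\mathsf{p}(u),u\}$, $u\notin\mathrm{root}(\mathcal{T})$ (equivalently, classes of $u\sim w$ iff $\mathsf{p}^m(u)=\mathsf{p}^n(w)$ for some $m,n\ge0$); a tree $W$ is degenerate if $W$ is a single vertex; a directed tree is a directed forest with exactly one tree. $(V,\mathsf{p}_1)$ is thinner than $(V,\mathsf{p}_2)$ if $\mathsf{p}_1(v)\in\{v,\mathsf{p}_2(v)\}$ for all $v$. The leafless support $\mathring{\mathcal{T}}$ is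 the greatest (thickest) leafless directed forest on $V$ thinner than $\mathcal{T}$; it exists. *)

(* Defs.v *)
From Stdlib Require Import PeanoNat.

Definition piter {V : Type} (p : V -> V) (n : nat) (v : V) : V := Nat.iter n p v.

Definition directed_forest (V : Type) (p : V -> V) : Prop :=
  inhabited V /\ (forall (n : nat) (v : V), piter p (S n) v = v -> p v = v).

Definition is_root {V : Type} (p : V -> V) (v : V) : Prop := p v = v.

Definition leafless {V : Type} (p : V -> V) : Prop := forall v : V, exists u : V, p u = v.

Definition thinner {V : Type} (p1 p2 : V -> V) : Prop :=
  forall v : V, p1 v = v \/ p1 v = p2 v.

Definition same_tree {V : Type} (p : V -> V) (u w : V) : Prop :=
  exists m n : nat, piter p m u = piter p n w.

Definition directed_tree (V : Type) (p : V -> V) : Prop :=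
  directed_forest V p /\ (forall u w : V, same_tree p u w).

Definition in_nondegenerate_tree {V : Type} (p : V -> V) (v : V) : Prop :=
  exists u : V, u <> v /\ same_tree p u v.

Definition leafless_support {V : Type} (p q : V -> V) : Prop :=
  directed_forest V q /\ leafless q /\ thinner q p /\
  (forall r : V -> V, directed_forest V r -> leafless r -> thinner r p -> thinner r q).

(* Main.v *)
Require Import Defs.
From Stdlib Require Import Classical ClassicalEpsilon PeanoNat Lia.

Lemma piter_S' {V} (p : V -> V) n v : piter p (S n) v = piter p n (p v).
Proof. induction n; simpl; auto. unfold piter in *; simpl in *. now rewrite IHn. Qed.

Lemma piter_add {V} (p : V -> V) m n v : piter p (m + n) v = piter p m (piter p n v).
Proof. induction m; simpl; auto. unfold piter in *; simpl. now rewrite IHm. Qed.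

Lemma piter_fix {V} (p : V -> V) v n : p v = v -> piter p n v = v.
Proof. intro H; induction n; simpl; auto. unfold piter in *; simpl. now rewrite IHn. Qed.

Lemma same_tree_sym {V} (p : V -> V) u w : same_tree p u w -> same_tree p w u.
Proof. intros [m [n H]]. now exists n, m. Qed.

Lemma same_tree_trans {V} (p : V -> V) x y z :
  same_tree p x y -> same_tree p y z -> same_tree p x z.
Proof.
  intros [a [b H1]] [c [d H2]]. exists (c + a), (b + d).
  rewrite piter_add, H1, <- piter_add, Nat.add_comm, piter_add, H2, <- piter_add.
  reflexivity.
Qed.

Section B.
Variables (V : Type) (p q : V -> V).
Hypothesis HT : directed_forest V p.
Hypothesis Hq : leafless_support p q.

Lemma qp v : q v <> v -> q v = p v.
Proof. destruct Hq as [_ [_ [Ht _]]]. destruct (Ht v); tauto. Qed.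


Lemma keyB v : q v <> v -> q (q v) = p (q v).
Proof.
  intros Hv. set (w := q v).
  destruct (classic (q w = w)) as [Hw | Hw]; [| now apply qp].
  rewrite Hw. apply NNPP; intro Hpw.
  destruct Hq as [Hqf [Hql [Ht Hmax]]].
  set (r := fun x => if excluded_middle_informative (x = w) then p w else q x).
  assert (rw : r w = p w).
  { unfold r; destruct (excluded_middle_informative (w = w)); congruence. }
  assert (rx : forall x, x <> w -> r x = q x).
  { intros x hx; unfold r; destruct (excluded_middle_informative (x = w)); congruence. }
  assert (vw : v <> w) by (unfold w; congruence).
  assert (path : forall k y, piter r k y = w -> piter p k y = w).
  { induction k; intros y Hy; [exact Hy|].
    rewrite piter_S' in Hy |- *.
    destruct (classic (y = w)) as [-> | hy].
    - rewrite rw in Hy. now apply IHk.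
    - rewrite (rx y hy) in Hy.
      destruct (Ht y) as [E | E].
      + exfalso. rewrite E in Hy. rewrite <- (rx y hy) in E.
        rewrite (piter_fix r y k E) in Hy. congruence.
      + rewrite E in Hy. now apply IHk. }
  assert (Hrf : directed_forest V r).
  { split; [now destruct Hqf|].
    intros n x Hx.
    destruct (classic (exists j, j <= n /\ piter r j x = w)) as [[j [hj Hj]] | Hn].
    - exfalso. assert (piter r (S n) w = w).
      { rewrite <- Hj, <- piter_add, Nat.add_comm, piter_add, Hx. reflexivity. }
      apply path in H. destruct HT as [_ HTc]. apply Hpw; symmetry; apply (HTc n), H.
    - assert (E : forall j, j <= S n -> piter r j x = piter q j x).
      { induction j; intros hj; [reflexivity|].
        change (r (piter r j x) = q (piter q j x)). rewrite <- IHj by lia. apply rx.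
        intro C. apply Hn. exists j. split; [lia|exact C]. }
      assert (hx : x <> w) by (intro C; apply Hn; exists 0; split; [lia|exact C]).
      rewrite (rx x hx). destruct Hqf as [_ Hqc]. apply (Hqc n).
      rewrite <- E by lia. exact Hx. }
  assert (Hrl : leafless r).
  { intro x. destruct (Hql x) as [u Hu].
    destruct (classic (u = w)) as [-> | hu].
    - exists v. rewrite (rx v vw). fold w. congruence.
    - exists u. now rewrite rx. }
  assert (Hrt : thinner r p).
  { intro x. destruct (classic (x = w)) as [-> | hx].
    - right; exact rw.
    - rewrite (rx x hx). apply Ht. }
  destruct (Hmax r Hrf Hrl Hrt w) as [E | E]; rewrite rw in E; congruence.
Qed.

Lemma good_step x : q x = p x -> q (q x) = p (q x).
Proof.
  intro H. destruct (classic (q x = x)) as [E | E].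
  - rewrite E. congruence.
  - now apply keyB.
Qed.

Lemma good_all v : q v <> v -> forall n, q (piter q n v) = p (piter q n v).
Proof.
  intros Hv n. induction n.
  - now apply qp.
  - apply (good_step _ IHn).
Qed.

Lemma part1 v : ~ is_root q v -> forall n, piter q n v = piter p n v.
Proof.
  intros Hv n. induction n; [reflexivity|].
  change (q (piter q n v) = p (piter p n v)). rewrite <- IHn. now apply good_all.
Qed.
End B.

Theorem corollary4p6 (V : Type) (p q : V -> V)
  (HT : directed_forest V p) (Hq : leafless_support p q) :
  (forall v : V, ~ is_root q v -> forall n : nat, piter q n v = piter p n v)
  /\ (forall v1 v2 : V, ~ is_root q v1 -> ~ is_root q v2 ->
        same_tree p v1 v2 -> same_tree q v1 v2)
  /\ (directed_tree V p ->
        forall u w : V, in_nondegenerate_tree q u -> in_nondegenerate_tree q w ->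
          same_tree q u w).
Proof.
  assert (P2 : forall v1 v2 : V, ~ is_root q v1 -> ~ is_root q v2 ->
        same_tree p v1 v2 -> same_tree q v1 v2).
  { intros v1 v2 h1 h2 [m [n H]]. exists m, n.
    rewrite (part1 V p q HT Hq v1 h1), (part1 V p q HT Hq v2 h2). exact H. }
  assert (NR : forall u, in_nondegenerate_tree q u ->
             exists u0, ~ is_root q u0 /\ same_tree q u0 u).
  { intros u [u' [hne [a [b H]]]].
    destruct (classic (is_root q u')) as [Ru' | Ru'].
    - destruct (classic (is_root q u)) as [Ru | Ru].
      + exfalso. rewrite (piter_fix q u' a Ru'), (piter_fix q u b Ru) in H. auto.
      + exists u. split; [exact Ru|]. exists 0, 0. reflexivity.
    - exists u'. split; [exact Ru'|]. exists a, b. exact H. }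
  split; [exact (part1 V p q HT Hq)|]. split; [exact P2|].
  intros [_ Hall] u w Hu Hw.
  destruct (NR u Hu) as [u0 [hu0 su]]. destruct (NR w Hw) as [w0 [hw0 sw]].
  apply same_tree_trans with u0; [now apply same_tree_sym|].
  apply same_tree_trans with w0; [|exact sw].
  apply P2; auto.
Qed.
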